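(* Let $(A,B)$ be stabilizable and let $K\in\mathbb{R}^{m\times n}$ be a stabilizing gain. With $\hat B_x$, $\hat B_u$ as in the context (with quadratic relaxing function) for a given $\delta>0$, let $\hat B_K(x)=\hat B_x(x)+\hat B_u(Kx)$. Then $$\hat B_K(x)\le x^\top\big(M_x+K^\top M_uK\big)x\quad\text{for all }x\in\mathbb{R}^n,$$ where $M_x=\frac{1}{2\delta^2}C_x^\top\mathrm{diag}(\mathbf 1+w_x)C_x$ and $M_u=\frac{1}{2\delta^2}C_u^\top\mathrm{diag}(\mathbf 1+w_u)C_u$, with $w_x,w_u$ the weighting vectors in the weight recentered case and $w_x=0$, $w_u=0$ in the gradient recentered case.
   Context: Polytopes $\mathcal{X}=\{x\in\mathbb{R}^n:C_xx\le d_x\}$, $\mathcal{U}=\{u\in\mathbb{R}^m:C_uu\le d_u\}$ (compact), $C_x\in\mathbb{R}^{q_x\times n}$, $C_u\in\mathbb{R}^{q_u\times m}$, $d_x,d_u$ entrywise strictly positive; $C^i$ row $i$, $d^i$ entry $i$; $\mathbf 1$ is the all-ones vector. Quadratic relaxed barrier: for $\delta>0$ let $\beta_2(z;\delta)=\frac12\big[\big(\frac{z-2\delta}{\delta}\big)^2-1\big]-\ln\delta$ and $\hat B(z)=-\ln z$ for $z>\delta$, $\hat B(z)=\beta_2(z;\delta)$ for $z\le\delta$. With $z_x^i(x)=-C_x^ix+d_x^i$, $\hat B_x(x)=\sum_i\hat B_{x,i}(x)$ where either $\hat B_{x,i}(x)=\hat B(z_x^i(x))+\ln d_x^i-C_x^ix/d_x^i$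 for all $i$ (gradient recentering) or $\hat B_{x,i}(x)=(1+w_x^i)(\hat B(z_x^i(x))+\ln d_x^i)$ with $w_x\in\mathbb{R}^{q_x}$, $w_x\ge0$, $\sum_i(1+w_x^i)(C_x^i)^\top/d_x^i=0$ (weight recentering); $\hat B_u$ analogously from $C_u,d_u,w_u$. $\delta$ is such that $\hat B_x(0)=\hat B_u(0)=0$ and $\nabla\hat B_x(0)=\nabla\hat B_u(0)=0$. *)

(* Defs.v *)
From HB Require Import structures.
From mathcomp Require Import all_boot all_order all_algebra.
From mathcomp Require Import all_classical all_reals all_analysis.
Set Implicit Arguments. Unset Strict Implicit. Unset Printing Implicit Defensive.
Import Order.TTheory GRing.Theory Num.Theory.
Import numFieldNormedType.Exports.
Local Open Scope ring_scope.
Local Open Scope classical_set_scope.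

Section Barrier.
Variable R : realType.

Definition beta2 (delta z : R) : R :=
  ((((z - 2 * delta) / delta) ^+ 2 - 1) / 2) - ln delta.

Definition Bhat (delta z : R) : R :=
  if delta < z then - ln z else beta2 delta z.

Definition polytope (q k : nat) (C : 'M[R]_(q, k)) (d : 'cV[R]_q) : set 'cV[R]_k :=
  [set y | forall i, (C *m y) i 0 <= d i 0].

Definition zfun (q k : nat) (C : 'M[R]_(q, k)) (d : 'cV[R]_q) (y : 'cV[R]_k) (i : 'I_q) : R :=
  - (C *m y) i 0 + d i 0.

Definition B_grad (q k : nat) (delta : R) (C : 'M[R]_(q, k)) (d : 'cV[R]_q)
  (y : 'cV[R]_k) : R :=
  \sum_(i < q) (Bhat delta (zfun C d y i) + ln (d i 0) - (C *m y) i 0 / d i 0).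

Definition B_weight (q k : nat) (delta : R) (C : 'M[R]_(q, k)) (d : 'cV[R]_q)
  (w : 'cV[R]_q) (y : 'cV[R]_k) : R :=
  \sum_(i < q) ((1 + w i 0) * (Bhat delta (zfun C d y i) + ln (d i 0))).

Definition Bhat_rec (grad : bool) (q k : nat) (delta : R) (C : 'M[R]_(q, k))
  (d : 'cV[R]_q) (w : 'cV[R]_q) (y : 'cV[R]_k) : R :=
  if grad then B_grad delta C d y else B_weight delta C d w y.

Definition weight_ok (q k : nat) (C : 'M[R]_(q, k)) (d : 'cV[R]_q) (w : 'cV[R]_q) : Prop :=
  (forall i, 0 <= w i 0) /\
  \sum_(i < q) (((1 + w i 0) / d i 0) *: (row i C)^T) = 0.

Definition wvec (grad : bool) (q : nat) (w : 'cV[R]_q) : 'cV[R]_q :=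
  if grad then 0 else w.

Definition Mmat (q k : nat) (delta : R) (C : 'M[R]_(q, k)) (w : 'cV[R]_q) : 'M[R]_k :=
  (2 * delta ^+ 2)^-1 *: (C^T *m diag_mx (const_mx 1 + w^T) *m C).

Definition schur_stable (n : nat) (M : 'M[R]_n) : Prop :=
  (fun k : nat => iter k (mulmx M) 1%:M) @ \oo --> (0 : 'M[R]_n).

Definition stabilizing (n m : nat) (A : 'M[R]_n) (B : 'M[R]_(n, m)) (K : 'M[R]_(m, n)) : Prop :=
  schur_stable (A + B *m K).

Definition stabilizable (n m : nat) (A : 'M[R]_n) (B : 'M[R]_(n, m)) : Prop :=
  exists K : 'M[R]_(m, n), stabilizing A B K.

End Barrier.

(* Main.v *)
Require Import Defs.
From HB Require Import structures.
From mathcomp Require Import all_boot all_order all_algebra.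
From mathcomp Require Import all_classical all_reals all_analysis.
Import Order.TTheory GRing.Theory Num.Theory.
Import numFieldNormedType.Exports.
Local Open Scope ring_scope.
Local Open Scope classical_set_scope.
From mathcomp Require Import ring lra.
Section S.
Variable R : realType.
Lemma mvt_pos (g dg : R -> R) (a b : R) : 0 < a -> a < b ->
  (forall x : R, 0 < x -> is_derive x 1 g (dg x)) ->
  exists2 c, a < c < b & g b - g a = dg c * (b - a).
Proof.
move=> a0 ab hd.
have H1 : forall x, x \in `]a, b[%R -> is_derive x 1 g (dg x).
  move=> x; rewrite in_itv /= => /andP[ax _]; apply: hd; lra.
have H2 : {within `[a, b], continuous g}.
  apply: derivable_within_continuous => x; rewrite in_itv /= => /andP[ax _].
  have := hd x ltac:(lra) => H; exact: ex_derive.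
have [c cab E] := MVT ab H1 H2.
by exists c => //; move: cab; rewrite in_itv.
Qed.

Lemma dlnq (k a b x : R) : 0 < x ->
  is_derive x 1 (fun t : R => k * ln t + (a * t + b * t ^+ 2)) (k / x + (a + 2 * b * x)).
Proof.
move=> x0.
have -> : (fun t : R => k * ln t + (a * t + b * t ^+ 2)) =
   (k \*: (@ln R)) + horner (a *: 'X + b *: 'X^2).
  apply/funext => t /=. by rewrite !fctE !hornerE /=.
have Hp : is_derive x 1 (horner (a *: 'X + b *: 'X^2)) (a + 2 * b * x).
  have := is_derive_poly (a *: 'X + b *: 'X^2) x.
  move=> H; apply: (is_derive_eq H).
  rewrite derivD !derivZ derivX derivXn !hornerE /=; ring.
apply: is_derive_eq.
  exact: (is_deriveD (is_deriveZ k (is_derive1_ln x0)) Hp).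
by rewrite mulrC.
Qed.

Lemma F_mvt (k a b x y : R) : 0 < x -> x < y ->
  exists2 c, x < c < y &
  (k * ln y + (a * y + b * y ^+ 2)) - (k * ln x + (a * x + b * x ^+ 2))
   = (k / c + (a + 2 * b * c)) * (y - x).
Proof.
move=> x0 xy.
have [c Hc E] := (@mvt_pos (fun t : R => k * ln t + (a * t + b * t ^+ 2))
  (fun c => k / c + (a + 2 * b * c)) x y x0 xy (fun t t0 => dlnq k a b t t0)).
by exists c.
Qed.

Lemma S1 (dl d z : R) : 0 < dl -> dl <= d -> dl <= z ->
  - ln z + ln d + (z - d) / d <= (z - d) ^+ 2 / (2 * dl ^+ 2).
Proof.
move=> dl0 dld dlz.
have d0 : 0 < d by lra.
have z0 : 0 < z by lra.
pose a := d^-1 + d / dl ^+ 2; pose b := - (2 * dl ^+ 2)^-1.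
pose F := fun t : R => -1 * ln t + (a * t + b * t ^+ 2).
rewrite -subr_le0.
have -> : - ln z + ln d + (z - d) / d - (z - d) ^+ 2 / (2 * dl ^+ 2) = F z - F d.
  rewrite /F /a /b; field; lra.
have dF : forall c, 0 < c -> -1 / c + (a + 2 * b * c) = (c - d) * (dl ^+ 2 - c * d) / (c * d * dl ^+ 2).
  move=> c c0; rewrite /a /b; field; lra.
case: (ltgtP z d) => [zd|dz|->]; last by rewrite subrr.
- have [c /andP[zc cd] E] := F_mvt (-1) a b z d z0 zd.
  rewrite -oppr_ge0 opprB /F E dF; last by lra.
  apply: mulr_ge0; last lra.
  apply: divr_ge0; last by apply: mulr_ge0; [nra|nra].
  rewrite -mulrNN; apply: mulr_ge0; first lra.
  have : dl * dl <= c * d by nra.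
  rewrite expr2; lra.
- have [c /andP[dc cz] E] := F_mvt (-1) a b d z d0 dz.
  rewrite /F E dF; last by lra.
  have cd2 : 0 <= c * d * dl ^+ 2 by apply: mulr_ge0; [nra|exact: sqr_ge0].
  have : dl * dl <= c * d by nra.
  rewrite expr2 => hcd.
  apply: mulr_le0_ge0; last lra.
  apply: mulr_le0_ge0; last by rewrite invr_ge0 -expr2.
  apply: mulr_ge0_le0; lra.
Qed.

Definition Tf (dl d z : R) := Bhat dl z + ln d + (z - d) / d.

Lemma Tbound (dl d z : R) : 0 < dl -> dl <= d ->
  Tf dl d z <= (z - d) ^+ 2 / (2 * dl ^+ 2).
Proof.
move=> dl0 dld; rewrite /Tf /Bhat.
case: ifP => [dlz|/negbT]; first by apply: S1 => //; lra.
rewrite -leNgt => zdl.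
have H := S1 dl d dl dl0 dld (lexx dl).
rewrite -subr_le0.
have -> : beta2 dl z + ln d + (z - d) / d - (z - d) ^+ 2 / (2 * dl ^+ 2) =
  (- ln dl + ln d + (dl - d) / d - (dl - d) ^+ 2 / (2 * dl ^+ 2))
   + (z - dl) * ((d - dl) ^+ 2 / (dl ^+ 2 * d)).
  rewrite /beta2; field; lra.
have : (z - dl) * ((d - dl) ^+ 2 / (dl ^+ 2 * d)) <= 0.
  apply: mulr_le0_ge0; first lra.
  apply: divr_ge0; first exact: sqr_ge0.
  apply: mulr_ge0; [exact: sqr_ge0| lra].
lra.
Qed.

Lemma Tneg (dl d : R) : 0 < dl -> 0 < d -> Tf dl d d <= 0 /\ (d < dl -> Tf dl d d < 0).
Proof.
move=> dl0 d0.
suff H : d < dl -> Tf dl d d < 0.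
  split => //; case: (ltgtP d dl) => [/H/ltW //|dld|->].
  - by rewrite /Tf /Bhat dld subrr mul0r addr0 addNr.
  - rewrite /Tf /Bhat ltxx /beta2 subrr mul0r addr0.
    have -> : ((dl - 2 * dl) / dl) = -1 by field; lra.
    rewrite sqrrN expr1n subrr mul0r; lra.
move=> ddl.
have hf : (dl < d) = false by rewrite ltNge (ltW ddl).
rewrite /Tf /Bhat hf subrr mul0r addr0.
pose a := - (2 / dl); pose b := (2 * dl ^+ 2)^-1.
have [c /andP[dc cdl] E] := F_mvt 1 a b d dl d0 ddl.
have -> : beta2 dl d + ln d = - ((1 * ln dl + (a * dl + b * dl ^+ 2)) - (1 * ln d + (a * d + b * d ^+ 2))).
  rewrite /beta2 /a /b; field; lra.
rewrite E oppr_lt0; apply: mulr_gt0; last lra.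
have -> : 1 / c + (a + 2 * b * c) = (dl - c) ^+ 2 / (c * dl ^+ 2).
  rewrite /a /b; field; lra.
apply: divr_gt0; first by rewrite exprn_gt0 // subr_gt0.
apply: mulr_gt0; [lra | exact: exprn_gt0].
Qed.

Lemma lin0 (q k : nat) (C : 'M[R]_(q, k)) (d w : 'cV[R]_q) (y : 'cV[R]_k) :
  weight_ok C d w -> \sum_(i < q) (1 + w i 0) * (- (C *m y) i 0 / d i 0) = 0.
Proof.
move=> [_ H].
have Hj : forall j, \sum_(i < q) ((1 + w i 0) / d i 0) * C i j = 0.
  move=> j; have := congr1 (fun M : 'cV[R]_k => M j 0) H.
  rewrite /= summxE !mxE => E; apply: etrans E; apply: eq_bigr => i _; by rewrite !mxE.
transitivity (- \sum_(i < q) \sum_(j < k) ((1 + w i 0) / d i 0 * C i j) * y j 0).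
  rewrite -sumrN; apply: eq_bigr => i _.
  under eq_bigr => j _ do rewrite -mulrA.
  rewrite -mulr_sumr mxE; ring.
rewrite exchange_big /= big1 ?oppr0 // => j _.
by rewrite -mulr_suml Hj mul0r.
Qed.

Lemma Brec_eq (g : bool) (q k : nat) (dl : R) (C : 'M[R]_(q, k)) (d w : 'cV[R]_q) (y : 'cV[R]_k) :
  (g = false -> weight_ok C d w) ->
  Bhat_rec g dl C d w y = \sum_(i < q) (1 + wvec g w i 0) * Tf dl (d i 0) (zfun C d y i).
Proof.
have hz : forall i, (zfun C d y i - d i 0) / d i 0 = - (C *m y) i 0 / d i 0.
  by move=> i; rewrite /zfun addrK.
case: g => hw; rewrite /Bhat_rec /wvec.
  rewrite /B_grad; apply: eq_bigr => i _; rewrite [X in 1 + X]mxE addr0 mul1r /Tf hz mulNr.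
  by [].
rewrite /B_weight.
have := @lin0 q k C d w y (hw erefl) => H0.
rewrite -[LHS]addr0; rewrite -[X in _ + X = _]H0 -big_split /=; apply: eq_bigr => i _.
by rewrite /Tf hz [RHS]mulrDr.
Qed.

Lemma quad_eq (q k : nat) (dl : R) (C : 'M[R]_(q, k)) (w : 'cV[R]_q) (y : 'cV[R]_k) :
  (y^T *m Mmat dl C w *m y) 0 0 =
  \sum_(i < q) (1 + w i 0) * ((C *m y) i 0) ^+ 2 / (2 * dl ^+ 2).
Proof.
rewrite /Mmat -scalemxAr -scalemxAl [in LHS]mxE.
have -> : y^T *m (C^T *m diag_mx (const_mx 1 + w^T) *m C) *m y =
   (C *m y)^T *m diag_mx (const_mx 1 + w^T) *m (C *m y).
  by rewrite trmx_mul !mulmxA.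
rewrite mxE mulr_sumr; apply: eq_bigr => i _.
rewrite mul_mx_diag !mxE; ring.
Qed.

Lemma zfun0 (q k : nat) (C : 'M[R]_(q, k)) (d : 'cV[R]_q) i : zfun C d 0 i = d i 0.
Proof. by rewrite /zfun mulmx0 mxE oppr0 add0r. Qed.

Lemma bound1 (g : bool) (q k : nat) (dl : R) (C : 'M[R]_(q, k)) (d w : 'cV[R]_q) (y : 'cV[R]_k) :
  0 < dl -> (forall i, 0 < d i 0) -> (g = false -> weight_ok C d w) ->
  Bhat_rec g dl C d w 0 = 0 ->
  Bhat_rec g dl C d w y <= (y^T *m Mmat dl C (wvec g w) *m y) 0 0.
Proof.
move=> dl0 hd hw B0.
have ha : forall i, 0 <= wvec g w i 0.
  move=> i; case: g hw B0 => hw B0 /=; first by rewrite mxE.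
  by case: (hw erefl) => h _; apply: h.
have hdl : forall i, dl <= d i 0.
  move=> i; rewrite (Brec_eq _ _ _ _ _ _ _ _ hw) in B0.
  have B1 : \sum_(i < q) - ((1 + wvec g w i 0) * Tf dl (d i 0) (zfun C d 0 i)) = 0.
    by rewrite sumrN B0 oppr0.
  have hge : forall i : 'I_q, true -> 0 <= - ((1 + wvec g w i 0) * Tf dl (d i 0) (zfun C d 0 i)).
    move=> j _; rewrite zfun0 oppr_ge0; apply: mulr_ge0_le0.
      by have := ha j; lra.
    by case: (Tneg dl (d j 0) dl0 (hd j)).
  have := @psumr_eq0P _ _ xpredT _ hge B1 i isT.
  rewrite zfun0 => /eqP; rewrite oppr_eq0 mulf_eq0 => /orP[/eqP h|/eqP h].
    by have := ha i; lra.
  rewrite leNgt; apply/negP => hlt.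
  by case: (Tneg dl (d i 0) dl0 (hd i)) => _ /(_ hlt); rewrite h ltxx.
rewrite (Brec_eq _ _ _ _ _ _ _ _ hw) quad_eq; apply: ler_sum => i _.
rewrite -mulrA; apply: ler_wpM2l; first by have := ha i; lra.
have -> : (C *m y) i 0 = - (zfun C d y i - d i 0) by rewrite /zfun; ring.
rewrite sqrrN; exact: Tbound.
Qed.
End S.

Theorem lemma3 (R : realType) (n m qx qu : nat)
  (A : 'M[R]_n) (B : 'M[R]_(n, m)) (K : 'M[R]_(m, n))
  (Cx : 'M[R]_(qx, n)) (dx : 'cV[R]_qx) (Cu : 'M[R]_(qu, m)) (du : 'cV[R]_qu)
  (wx : 'cV[R]_qx) (wu : 'cV[R]_qu) (gx gu : bool) (delta : R) :
  stabilizable A B -> stabilizing A B K ->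
  compact (polytope Cx dx) -> compact (polytope Cu du) ->
  (forall i, 0 < dx i 0) -> (forall i, 0 < du i 0) ->
  0 < delta ->
  (gx = false -> weight_ok Cx dx wx) ->
  (gu = false -> weight_ok Cu du wu) ->
  Bhat_rec gx delta Cx dx wx 0 = 0 ->
  Bhat_rec gu delta Cu du wu 0 = 0 ->
  (forall v : 'cV[R]_n, derivable (Bhat_rec gx delta Cx dx wx) 0 v /\
                        'D_v (Bhat_rec gx delta Cx dx wx) 0 = 0) ->
  (forall v : 'cV[R]_m, derivable (Bhat_rec gu delta Cu du wu) 0 v /\
                        'D_v (Bhat_rec gu delta Cu du wu) 0 = 0) ->
  forall x : 'cV[R]_n,
    Bhat_rec gx delta Cx dx wx x + Bhat_rec gu delta Cu du wu (K *m x)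
    <= (x^T *m (Mmat delta Cx (wvec gx wx)
                + K^T *m Mmat delta Cu (wvec gu wu) *m K) *m x) 0 0.
Proof.
move=> _ _ _ _ hdx hdu dl0 hwx hwu B0x B0u _ _ x.
rewrite mulmxDr mulmxDl mxE.
have -> : x^T *m (K^T *m Mmat delta Cu (wvec gu wu) *m K) *m x =
   (K *m x)^T *m Mmat delta Cu (wvec gu wu) *m (K *m x) by rewrite trmx_mul !mulmxA.
apply: lerD; exact: bound1.
Qed.
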